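(* Let $\mathbb{H}=\{z\in\mathbb{C}:\operatorname{Im}z>0\}$. For $z_1,z_2\in\mathbb{H}$ and $p\ge1$ let \[ T_p(z_1,z_2)=\frac{|z_1-z_2|}{|z_1-\overline{z_2}|\sqrt[p]{\alpha^p+(1-\alpha)^p}},\qquad \alpha=\frac{\operatorname{Im}(z_1)}{\operatorname{Im}(z_1)+\operatorname{Im}(z_2)}. \] Then \[ b_{\mathbb{H},p}(z_1,z_2)\ge T_p(z_1,z_2)\ge\frac{|z_1-z_2|}{|z_1-\overline{z_2}|}=s_{\mathbb{H}}(z_1,z_2). \] In particular $b_{\mathbb{H},1}(z_1,z_2)=T_1(z_1,z_2)=s_{\mathbb{H}}(z_1,z_2)$. For $p>1$, the equality $b_{\mathbb{H},p}(z_1,z_2)=T_p(z_1,z_2)$ holds if and only if $\operatorname{Re}(z_1)=\operatorname{Re}(z_2)$ or $\operatorname{Im}(z_1)=\operatorname{Im}(z_2)$.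
   Context: For $z_1,z_2\in\mathbb{H}$ and $p\ge1$, $b_{\mathbb{H},p}(z_1,z_2)=\sup_{t\in\mathbb{R}}\frac{|z_1-z_2|}{\sqrt[p]{|z_1-t|^p+|t-z_2|^p}}$, and $s_{\mathbb{H}}=b_{\mathbb{H},1}$. *)

(* Defs.v *)
From Stdlib Require Import Reals.
From Coquelicot Require Import Coquelicot.
Open Scope R_scope.

Definition inH (z : C) : Prop := 0 < Im z.

Definition bH_ratio (p : R) (z1 z2 : C) (t : R) : R :=
  Cmod (Cminus z1 z2) /
  Rpower (Rpower (Cmod (Cminus z1 (RtoC t))) p
          + Rpower (Cmod (Cminus (RtoC t) z2)) p) (1 / p).

Definition b_H (p : R) (z1 z2 : C) : Rbar :=
  Lub_Rbar (fun r => exists t : R, r = bH_ratio p z1 z2 t).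

Definition s_H (z1 z2 : C) : Rbar := b_H 1 z1 z2.

Definition alphaH (z1 z2 : C) : R := Im z1 / (Im z1 + Im z2).

Definition T_p (p : R) (z1 z2 : C) : R :=
  Cmod (Cminus z1 z2) /
  (Cmod (Cminus z1 (Cconj z2)) *
   Rpower (Rpower (alphaH z1 z2) p + Rpower (1 - alphaH z1 z2) p) (1 / p)).

(* Main.v *)
Require Import Defs.
From Stdlib Require Import Reals Lra Psatz.
From Coquelicot Require Import Coquelicot.
Open Scope R_scope.

Lemma exp_le_mono x y : x <= y -> exp x <= exp y.
Proof. intros [H|H]; [left; apply exp_increasing; auto | subst; lra]. Qed.

Lemma Rpower_pos x y : 0 < Rpower x y.
Proof. apply exp_pos. Qed.

Lemma tangent u p : 0 < u -> 1 <= p -> 1 + p * (u - 1) <= Rpower u p.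
Proof.
  intros Hu Hp. unfold Rpower. set (L := ln u).
  assert (H1 := exp_ineq1_le ((p-1)*L)).
  assert (H2 := exp_ineq1_le (-L)).
  assert (E1 : exp (p*L) = u * exp ((p-1)*L)).
  { replace (p*L) with (L + (p-1)*L) by ring. rewrite exp_plus. unfold L; rewrite exp_ln; auto. }
  assert (E2 : u * exp (-L) = 1).
  { unfold L. rewrite <- (exp_ln u) at 1 by auto. rewrite <- exp_plus. replace (ln u + - ln u) with 0 by ring. apply exp_0. }
  rewrite E1.
  assert (u * (1 + (p-1)*L) <= u * exp ((p-1)*L)) by (apply Rmult_le_compat_l; lra).
  assert ((p-1)*u*(1 - L) <= (p-1) * (u * exp (-L))).
  { rewrite <- Rmult_assoc. apply Rmult_le_compat_l; nra. }
  rewrite E2 in H0. nra.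
Qed.

Lemma convex2 x y p : 0 < x -> 0 < y -> 1 <= p ->
  2 * Rpower ((x+y)/2) p <= Rpower x p + Rpower y p.
Proof.
  intros Hx Hy Hp. set (m := (x+y)/2). assert (Hm : 0 < m) by (unfold m; lra).
  assert (Ex : x = m * (x/m)) by (field; lra).
  assert (Ey : y = m * (y/m)) by (field; lra).
  rewrite Ex at 1. rewrite Ey at 1.
  rewrite <- !Rpower_mult_distr; try (apply Rdiv_lt_0_compat; lra); try lra.
  assert (A := tangent (x/m) p ltac:(apply Rdiv_lt_0_compat; lra) Hp).
  assert (B := tangent (y/m) p ltac:(apply Rdiv_lt_0_compat; lra) Hp).
  assert (S : x/m + y/m = 2) by (unfold m; field; lra).
  assert (P := Rpower_pos m p).
  assert (Hx1 : Rpower m p * (1 + p * (x / m - 1)) <= Rpower m p * Rpower (x/m) p) by (apply Rmult_le_compat_l; lra).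
  assert (Hy1 : Rpower m p * (1 + p * (y / m - 1)) <= Rpower m p * Rpower (y/m) p) by (apply Rmult_le_compat_l; lra).
  assert (E : Rpower m p * (1 + p * (x / m - 1)) + Rpower m p * (1 + p * (y / m - 1)) = 2 * Rpower m p).
  { replace (y/m) with (2 - x/m) by lra. ring. }
  lra.
Qed.

Lemma lub_ub (f : R -> R) t : Rbar_le (f t) (Lub_Rbar (fun r => exists t, r = f t)).
Proof. destruct (Lub_Rbar_correct (fun r => exists t, r = f t)) as [Hub _]. apply Hub. exists t; auto. Qed.

Lemma lub_att (f : R -> R) t0 : (forall t, f t <= f t0) ->
  Lub_Rbar (fun r => exists t, r = f t) = Finite (f t0).
Proof.
  intros H. apply is_lub_Rbar_unique. split.
  - intros x [t ->]. simpl. auto.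
  - intros b Hb. apply Hb. exists t0; auto.
Qed.

Definition G (p : R) (z1 z2 : C) (t : R) : R :=
  Rpower (Cmod (Cminus z1 (RtoC t))) p + Rpower (Cmod (Cminus (RtoC t) z2)) p.

Lemma bH_ratio_G p z1 z2 t : bH_ratio p z1 z2 t = Cmod (Cminus z1 z2) / Rpower (G p z1 z2 t) (1/p).
Proof. reflexivity. Qed.

Lemma ratio_le p z1 z2 t s : 0 < p -> G p z1 z2 t <= G p z1 z2 s ->
  bH_ratio p z1 z2 s <= bH_ratio p z1 z2 t.
Proof.
  intros Hp H. rewrite !bH_ratio_G. unfold Rdiv. apply Rmult_le_compat_l. apply Cmod_ge_0.
  apply Rinv_le_contravar. apply Rpower_pos. apply Rle_Rpower_l.
  left; apply Rdiv_lt_0_compat; lra. split; auto. unfold G. assert (A:=Rpower_pos (Cmod (Cminus z1 t)) p).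
  assert (B:=Rpower_pos (Cmod (Cminus t z2)) p). lra.
Qed.

Lemma ratio_lt p z1 z2 t s : 0 < p -> 0 < Cmod (Cminus z1 z2) -> G p z1 z2 t < G p z1 z2 s ->
  bH_ratio p z1 z2 s < bH_ratio p z1 z2 t.
Proof.
  intros Hp HD H. rewrite !bH_ratio_G. unfold Rdiv. apply Rmult_lt_compat_l. auto.
  apply Rinv_lt_contravar. apply Rmult_lt_0_compat; apply Rpower_pos. apply Rlt_Rpower_l.
  apply Rdiv_lt_0_compat; lra. split; auto. unfold G. assert (A:=Rpower_pos (Cmod (Cminus z1 t)) p).
  assert (B:=Rpower_pos (Cmod (Cminus t z2)) p). lra.
Qed.

Lemma deriv_neg (f : R -> R) x l : derivable_pt_lim f x l -> l <> 0 -> exists y, f y < f x.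
Proof.
  intros H Hl. assert (He : 0 < Rabs l / 2) by (assert (0 < Rabs l) by (apply Rabs_pos_lt; auto); lra).
  destruct (H _ He) as [d Hd].
  assert (Hd0 := cond_pos d).
  destruct (Rlt_or_le 0 l) as [Lp|Ln].
  - assert (Hh : - (d/2) <> 0) by lra.
    assert (Ha : Rabs (- (d/2)) < d) by (rewrite Rabs_Ropp, Rabs_pos_eq; lra).
    specialize (Hd _ Hh Ha). rewrite (Rabs_pos_eq l) in He, Hd by lra.
    exists (x + - (d/2)). apply Rabs_def2 in Hd. destruct Hd as [Hd1 Hd2].
    assert (Q : 0 < (f (x + - (d / 2)) - f x) / - (d / 2)) by lra.
    unfold Rdiv in Q. assert (0 < / (d/2)) by (apply Rinv_0_lt_compat; lra).
    rewrite <- Ropp_inv_permute in Q by lra. nra.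
  - assert (Lneg : l < 0) by (destruct Ln; auto; contradiction).
    assert (Hh : (d/2) <> 0) by lra.
    assert (Ha : Rabs (d/2) < d) by (rewrite Rabs_pos_eq; lra).
    specialize (Hd _ Hh Ha). rewrite (Rabs_left l) in He, Hd by lra.
    exists (x + (d/2)). apply Rabs_def2 in Hd. destruct Hd as [Hd1 Hd2].
    assert (Q : (f (x + (d / 2)) - f x) / (d / 2) < 0) by lra.
    unfold Rdiv in Q. assert (0 < / (d/2)) by (apply Rinv_0_lt_compat; lra). nra.
Qed.
Lemma c1 x1 h1 t : Cmod (Cminus (x1,h1) (RtoC t)) = sqrt((x1-t)^2+h1^2).
Proof. unfold Cmod, Cminus, Cplus, Copp, RtoC; simpl. f_equal; ring. Qed.
Lemma c2 x2 h2 t : Cmod (Cminus (RtoC t) (x2,h2)) = sqrt((t-x2)^2+h2^2).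
Proof. unfold Cmod, Cminus, Cplus, Copp, RtoC; simpl. f_equal; ring. Qed.
Lemma cW x1 h1 x2 h2 : Cmod (Cminus (x1,h1) (Cconj (x2,h2))) = sqrt((x1-x2)^2+(h1+h2)^2).
Proof. unfold Cmod, Cminus, Cplus, Copp, Cconj; simpl. f_equal; ring. Qed.
Lemma cD x1 h1 x2 h2 : Cmod (Cminus (x1,h1) (x2,h2)) = sqrt((x1-x2)^2+(h1-h2)^2).
Proof. unfold Cmod, Cminus, Cplus, Copp; simpl. f_equal; ring. Qed.
Lemma deriv_G x1 h1 x2 h2 e t : 0 < h1 -> 0 < h2 ->
  is_derive (fun t => exp(e*ln((x1-t)^2+h1^2)) + exp(e*ln((t-x2)^2+h2^2))) t
   (e*(-2*(x1-t))/((x1-t)^2+h1^2) * exp(e*ln((x1-t)^2+h1^2)) + e*(2*(t-x2))/((t-x2)^2+h2^2)*exp(e*ln((t-x2)^2+h2^2))).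
Proof. intros. auto_derive. 
  - pose proof (Rle_0_sqr (x1 + -t)). pose proof (Rle_0_sqr (t + - x2)). unfold Rsqr in *.
    pose proof (Rmult_lt_0_compat h1 h1 H H). pose proof (Rmult_lt_0_compat h2 h2 H0 H0).
    rewrite !Rmult_1_r. split; [lra | split; [lra | auto]].
  - replace ((x1 + - t) * ((x1 + - t) * 1) + h1 * (h1 * 1)) with ((x1-t)^2+h1^2) by ring.
    replace ((t + - x2) * ((t + - x2) * 1) + h2 * (h2 * 1)) with ((t-x2)^2+h2^2) by ring.
    field. split; apply Rgt_not_eq; apply Rplus_le_lt_0_compat; try apply pow2_ge_0; apply pow_lt; auto.
Qed.

Lemma sqrt_scale c Q K : 0 <= c -> 0 <= K -> Q = c^2*K -> sqrt Q = c * sqrt K.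
Proof. intros Hc HK ->. rewrite sqrt_mult; try lra; try (apply pow2_ge_0). rewrite sqrt_pow2; auto. Qed.

Lemma pow_le_self u p : 0 < u < 1 -> 1 <= p -> Rpower u p <= u.
Proof.
  intros Hu Hp. unfold Rpower. assert (ln u < 0) by (rewrite <- ln_1; apply ln_increasing; lra).
  rewrite <- (exp_ln u) at 2 by lra. apply exp_le_mono. nra.
Qed.

Lemma Rpower_1_base y : Rpower 1 y = 1.
Proof. unfold Rpower. rewrite ln_1, Rmult_0_r. apply exp_0. Qed.

Lemma expr_a a K e : 0 < a -> 0 < K -> exp (e * ln (a^2*K)) / a = exp ((2*e-1)*ln a + e*ln K).
Proof.
  intros Ha HK. rewrite ln_mult by (try apply pow_lt; auto).
  replace (a^2) with (a*a) by ring. rewrite ln_mult by auto.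
  replace ((2*e-1)*ln a + e*ln K) with (e * (ln a + ln a + ln K) + - ln a) by ring.
  rewrite exp_plus, exp_Ropp, exp_ln by auto. reflexivity.
Qed.

Lemma G_sqrt p x1 h1 x2 h2 t : 0 < h1 -> 0 < h2 ->
  G p (x1,h1) (x2,h2) t = exp((/2*p)*ln((x1-t)^2+h1^2)) + exp((/2*p)*ln((t-x2)^2+h2^2)).
Proof.
  intros. unfold G. rewrite c1, c2.
  rewrite <- !Rpower_sqrt. rewrite !Rpower_mult. reflexivity.
  all: apply Rplus_le_lt_0_compat; try apply pow2_ge_0; apply pow_lt; auto.
Qed.

Theorem theorem3p21 (z1 z2 : C) (p : R) :
  inH z1 -> inH z2 -> 1 <= p ->
  Rbar_le (Finite (T_p p z1 z2)) (b_H p z1 z2) /\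
  T_p p z1 z2 >= Cmod (Cminus z1 z2) / Cmod (Cminus z1 (Cconj z2)) /\
  s_H z1 z2 = Finite (Cmod (Cminus z1 z2) / Cmod (Cminus z1 (Cconj z2))) /\
  (b_H 1 z1 z2 = Finite (T_p 1 z1 z2) /\
   Finite (T_p 1 z1 z2) = s_H z1 z2) /\
  (1 < p ->
   (b_H p z1 z2 = Finite (T_p p z1 z2) <-> (Re z1 = Re z2 \/ Im z1 = Im z2))).
Proof.
  intros H1 H2 Hp. destruct z1 as [x1 h1], z2 as [x2 h2]. unfold inH in *; simpl in H1, H2.
  set (K := (x1-x2)^2+(h1+h2)^2).
  assert (HK : 0 < K) by (unfold K; apply Rplus_le_lt_0_compat; [apply pow2_ge_0 | apply pow_lt; lra]).
  set (W := sqrt K). assert (HW : 0 < W) by (apply sqrt_lt_R0; auto).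
  set (a := h1/(h1+h2)).
  assert (Ha : 0 < a < 1). { unfold a; split. apply Rdiv_lt_0_compat; lra. apply (Rmult_lt_reg_r (h1+h2)); [lra|]. unfold Rdiv; rewrite Rmult_assoc, Rinv_l; lra. }
  set (t0 := x1 + a*(x2-x1)).
  assert (HQ1 : (x1-t0)^2+h1^2 = a^2*K) by (unfold t0, a, K; field; lra).
  assert (HQ2 : (t0-x2)^2+h2^2 = (1-a)^2*K) by (unfold t0, a, K; field; lra).
  assert (HA1 : Cmod (Cminus (x1,h1) (RtoC t0)) = a*W).
  { rewrite c1. apply sqrt_scale; lra. }
  assert (HA2 : Cmod (Cminus (RtoC t0) (x2,h2)) = (1-a)*W).
  { rewrite c2. apply sqrt_scale; lra. }
  assert (HWc : Cmod (Cminus (x1,h1) (Cconj (x2,h2))) = W) by (rewrite cW; reflexivity).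
  set (D := Cmod (Cminus (x1,h1) (x2,h2))).
  assert (HD : 0 <= D) by apply Cmod_ge_0.
  assert (Tp_eq : forall q, 0 < q -> T_p q (x1,h1) (x2,h2) = bH_ratio q (x1,h1) (x2,h2) t0).
  { intros q Hq. rewrite bH_ratio_G. unfold G. rewrite HA1, HA2.
    rewrite <- !Rpower_mult_distr by lra.
    unfold T_p. change (alphaH (x1,h1) (x2,h2)) with a. rewrite HWc. fold D.
    assert (HA : 0 < Rpower a q + Rpower (1-a) q) by (pose proof (Rpower_pos a q); pose proof (Rpower_pos (1-a) q); lra).
    replace (Rpower a q * Rpower W q + Rpower (1 - a) q * Rpower W q)
      with ((Rpower a q + Rpower (1 - a) q) * Rpower W q) by ring.
    rewrite <- Rpower_mult_distr by (auto; apply Rpower_pos).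
    rewrite Rpower_mult. replace (q * (1/q)) with 1 by (field; lra). rewrite Rpower_1 by auto.
    rewrite Rmult_comm. reflexivity. }
  assert (T1 : T_p 1 (x1,h1) (x2,h2) = D / W).
  { unfold T_p. change (alphaH (x1,h1) (x2,h2)) with a. rewrite HWc. fold D.
    rewrite !Rpower_1 by lra. replace (a + (1-a)) with 1 by ring. rewrite Rpower_1_base. f_equal; ring. }
  assert (Hub : forall q t, Rbar_le (bH_ratio q (x1,h1) (x2,h2) t) (b_H q (x1,h1) (x2,h2))).
  { intros q t. apply (lub_ub (bH_ratio q (x1,h1) (x2,h2))). }
  assert (Hatt : forall q, (forall t, bH_ratio q (x1,h1) (x2,h2) t <= bH_ratio q (x1,h1) (x2,h2) t0) ->
     b_H q (x1,h1) (x2,h2) = Finite (bH_ratio q (x1,h1) (x2,h2) t0)).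
  { intros q Hq. apply (lub_att (bH_ratio q (x1,h1) (x2,h2))). auto. }
  assert (Hc1 : forall t, 0 < Cmod (Cminus (x1,h1) (RtoC t))).
  { intros t. rewrite c1. apply sqrt_lt_R0. apply Rplus_le_lt_0_compat; [apply pow2_ge_0 | apply pow_lt; lra]. }
  assert (Hc2 : forall t, 0 < Cmod (Cminus (RtoC t) (x2,h2))).
  { intros t. rewrite c2. apply sqrt_lt_R0. apply Rplus_le_lt_0_compat; [apply pow2_ge_0 | apply pow_lt; lra]. }
  assert (Htri : forall t, W <= Cmod (Cminus (x1,h1) (RtoC t)) + Cmod (Cminus (RtoC t) (x2,h2))).
  { intros t. rewrite c1, c2. unfold W, K.
    pose proof (Cmod_triangle (x1-t,h1) (t-x2,h2)) as T. unfold Cmod, Cplus in T; simpl in T.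
    replace (x1 - t + (t - x2)) with (x1-x2) in T by ring.
    replace ((x1-t)^2+h1^2) with ((x1 - t) ^ 2 + h1 ^ 2) by ring. exact T. }
  assert (HS : s_H (x1,h1) (x2,h2) = Finite (D / W)).
  { unfold s_H. rewrite Hatt. rewrite <- Tp_eq, T1 by lra. reflexivity.
    intros t. apply ratio_le; [lra|]. unfold G. rewrite HA1, HA2, !Rpower_1; auto; try nra.
    specialize (Htri t). lra. }
  split; [|split; [|split; [|split]]].
  - rewrite Tp_eq by lra. apply Hub.
  - unfold T_p. change (alphaH (x1,h1) (x2,h2)) with a. rewrite HWc. fold D.
    set (A := Rpower a p + Rpower (1-a) p).
    assert (HA : 0 < A) by (unfold A; pose proof (Rpower_pos a p); pose proof (Rpower_pos (1-a) p); lra).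
    assert (HA1' : A <= 1) by (unfold A; pose proof (pow_le_self a p Ha Hp); pose proof (pow_le_self (1-a) p ltac:(lra) Hp); lra).
    assert (Hc : Rpower A (1/p) <= 1).
    { apply Rle_trans with (Rpower 1 (1/p)); [|rewrite Rpower_1_base; lra]. apply Rle_Rpower_l. left; apply Rdiv_lt_0_compat; lra. lra. }
    pose proof (Rpower_pos A (1/p)).
    apply Rle_ge. unfold Rdiv. apply Rmult_le_compat_l; auto. apply Rinv_le_contravar. nra.
    rewrite <- (Rmult_1_r W) at 2. apply Rmult_le_compat_l; lra.
  - rewrite HWc. exact HS.
  - split.
    + change (b_H 1 (x1,h1) (x2,h2)) with (s_H (x1,h1) (x2,h2)). rewrite HS, T1. reflexivity.
    + rewrite HS, T1. reflexivity.
  - intros Hp1. simpl. split.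
    + intros Heq. destruct (Req_dec x1 x2) as [E|E]; [left; auto|].
      destruct (Req_dec h1 h2) as [E'|E']; [right; auto|]. exfalso.
      set (e := /2*p).
      assert (Hder := deriv_G x1 h1 x2 h2 e t0 H1 H2).
      rewrite HQ1, HQ2 in Hder.
      set (L := e * (-2 * (x1 - t0)) / (a ^ 2 * K) * exp (e * ln (a ^ 2 * K)) +
        e * (2 * (t0 - x2)) / ((1 - a) ^ 2 * K) * exp (e * ln ((1 - a) ^ 2 * K))) in Hder.
      assert (HL : L = 2*e*(x1-x2)/K * (exp (e * ln ((1 - a) ^ 2 * K)) / (1-a) - exp (e * ln (a ^ 2 * K)) / a)).
      { unfold L. replace (x1 - t0) with (a*(x1-x2)) by (unfold t0; ring).
        replace (t0 - x2) with ((1-a)*(x1-x2)) by (unfold t0; ring). field. lra. }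
      rewrite !expr_a in HL by lra.
      assert (HL0 : L <> 0).
      { rewrite HL. intros Z. apply Rmult_integral in Z. destruct Z as [Z|Z].
        - unfold Rdiv in Z. apply Rmult_integral in Z. destruct Z as [Z|Z].
          + unfold e in Z. assert (x1 - x2 <> 0) by lra. assert (0 < p) by lra. nra.
          + pose proof (Rinv_0_lt_compat K HK). lra.
        - assert (Z' : exp ((2 * e - 1) * ln (1 - a) + e * ln K) = exp ((2 * e - 1) * ln a + e * ln K)) by lra.
          apply exp_inv in Z'. assert (Z2 : (2*e-1) * (ln (1-a) - ln a) = 0) by lra.
          apply Rmult_integral in Z2. destruct Z2 as [Z2|Z2]. unfold e in Z2. lra.
          assert (ln (1-a) = ln a) by lra. apply ln_inv in H; try lra.
          apply E'. unfold a in H. apply Rmult_eq_reg_r with (/(h1+h2)).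
          2: { apply Rgt_not_eq. apply Rinv_0_lt_compat. lra. }
          assert (1 - h1/(h1+h2) = h2/(h1+h2)) by (field; lra). unfold Rdiv in *. lra. }
      apply is_derive_Reals in Hder. destruct (deriv_neg _ _ _ Hder HL0) as [t Ht].
      cbv beta in Ht. unfold e in Ht. rewrite <- !G_sqrt in Ht by auto.
      assert (HD0 : 0 < D).
      { unfold D. rewrite cD. apply sqrt_lt_R0. assert (x1 - x2 <> 0) by lra. assert (0 < (x1-x2)^2) by (rewrite <- Rsqr_pow2; apply Rsqr_pos_lt; auto). pose proof (pow2_ge_0 (h1-h2)). lra. }
      pose proof (ratio_lt p (x1,h1) (x2,h2) t t0 ltac:(lra) HD0 Ht) as Hlt.
      specialize (Hub p t). rewrite Heq in Hub. simpl in Hub. rewrite Tp_eq in Hub by lra. lra.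
    + intros HE. rewrite Tp_eq by lra. apply Hatt. intros t. apply ratio_le; [lra|].
      destruct HE as [E|E].
      * unfold G. rewrite !c1, !c2. assert (Et0 : t0 = x1) by (unfold t0; rewrite E; ring).
        rewrite Et0, <- E. apply Rplus_le_compat; apply Rle_Rpower_l; try lra; split;
          try (apply sqrt_lt_R0; apply Rplus_le_lt_0_compat; [apply pow2_ge_0 | apply pow_lt; lra]);
          apply sqrt_le_1_alt; replace (x1 - x1) with 0 by ring; replace (0^2) with 0 by ring;
          pose proof (pow2_ge_0 (x1 - t)); pose proof (pow2_ge_0 (t - x1)); lra.
      * assert (Ea : a = /2) by (unfold a; rewrite E; field; lra).
        unfold G at 1. rewrite HA1, HA2, Ea. replace (1 - /2) with (/2) by field.
        unfold G. specialize (Htri t).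
        pose proof (convex2 _ _ p (Hc1 t) (Hc2 t) Hp).
        assert (Rpower (/2 * W) p <= Rpower ((Cmod (Cminus (x1, h1) t) + Cmod (Cminus t (x2, h2))) / 2) p).
        { apply Rle_Rpower_l; lra. }
        lra.
Qed.
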